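(* There is a classical winning strategy for the matching game with parameter $m=4$, and there is also a classical winning strategy for the matching game with parameter $m=6$.
   Context: A perfect matching on $\{0,\ldots,m-1\}$ ($m$ even) is a partition of this set into $m/2$ sets of cardinality 2; $M_m$ denotes the set of all perfect matchings on $\{0,\ldots,m-1\}$. Let $L=\lceil\log_2 m\rceil$. For $n\in\{0,\ldots,m-1\}$, $\bar n\in\{0,1\}^L$ denotes the binary representation of $n$ written with exactly $L$ bits, most significant bit first (padded with leading zeros). On bit strings, $\oplus$ is applied bitwise, and for $u,v\in\{0,1\}^L$, $u\cdot v=\bigoplus_{i}(u_i\wedge v_i)$. The matching game with parameter $m$: Alice receives $x=x_0\cdots x_{m-1}\in\{0,1\}^m$ and outputs $a\in\{0,1\}^L$; Bob receives $y\in M_m$ and outputs a two-element set $\{b_1,b_2\}\subseteq\{0,\ldots,m-1\}$ together with a string $b\in\{0,1\}^L$. They win on question $(x,y)$ iff $\{b_1,b_2\}\in y$ and $x_{b_1}\oplus x_{b_2}=(\bar b_1\oplus\bar b_2)\cdot(a\oplus b)$; every pair $(x,y)\in\{0,1\}^m\times M_m$ is a possible question. The players cannot communicate and share no entanglement. A classical deterministic strategy is a pair of functions $s_A$ (from Alice's inputs to her outputs) and $s_B$ (from Bob's inputs to his outputs); a classical (randomized) strategy is a probability distribution over classical deterministic strategies (shared randomness). A strategy is winning if it wins with certainty on every question. *)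

(* Defs.v *)
From HB Require Import structures.
From mathcomp Require Import all_boot all_order all_algebra.
Set Implicit Arguments. Unset Strict Implicit. Unset Printing Implicit Defensive.
Import Order.TTheory GRing.Theory Num.Theory.

(* L = ceil(log2 m) : the smallest e with m <= 2^e *)
Definition Lbits (m : nat) : nat := up_log 2 m.

(* bit strings of length L, indexed 0..L-1 (index 0 = most significant bit) *)
Definition bits (m : nat) := {ffun 'I_(Lbits m) -> bool}.

Definition bin (m : nat) (n : 'I_m) : bits m :=
  [ffun i : 'I_(Lbits m) => odd (n %/ 2 ^ ((Lbits m).-1 - i))].

Definition xorb_bits (m : nat) (u v : bits m) : bits m :=
  [ffun i => u i (+) v i].

Definition dotb (m : nat) (u v : bits m) : bool :=
  \big[addb/false]_(i < Lbits m) (u i && v i).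

Definition is_perfect_matching (m : nat) (M : {set {set 'I_m}}) : bool :=
  partition M [set: 'I_m] && [forall B in M, #|B| == 2].

Definition matching (m : nat) := {M : {set {set 'I_m}} | is_perfect_matching M}.

Definition alice_in (m : nat) := {ffun 'I_m -> bool}.
(* Bob outputs the two-element set {b1,b2} (as the pair (b1,b2)) and b *)
Definition bob_out (m : nat) := ('I_m * 'I_m * bits m)%type.

Definition det_strategy (m : nat) :=
  ({ffun alice_in m -> bits m} * {ffun matching m -> bob_out m})%type.

Definition wins (m : nat) (x : alice_in m) (y : matching m)
    (a : bits m) (ob : bob_out m) : bool :=
  let: (b1, b2, b) := ob in
  ([set b1; b2] \in val y) &&
  (x b1 (+) x b2 == dotb (xorb_bits (bin b1) (bin b2)) (xorb_bits a b)).

Definition det_wins (m : nat) (s : det_strategy m) (x : alice_in m) (y : matching m) : bool :=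
  wins x y (s.1 x) (s.2 y).

(* classical (randomized) strategy: a probability distribution over
   deterministic strategies (shared randomness) *)
Definition is_distribution (m : nat) (p : {ffun det_strategy m -> rat}) : Prop :=
  (forall s, 0 <= p s)%R /\ (\sum_(s : det_strategy m) p s = 1)%R.

Definition winning_classical (m : nat) (p : {ffun det_strategy m -> rat}) : Prop :=
  forall (x : alice_in m) (y : matching m),
    (\sum_(s : det_strategy m | det_wins s x y) p s = 1)%R.

Definition has_classical_winning_strategy (m : nat) : Prop :=
  exists p : {ffun det_strategy m -> rat}, is_distribution p /\ winning_classical p.

(* Main.v *)
Require Import Defs.
From mathcomp Require Import all_boot all_order all_algebra.
Set Implicit Arguments. Unset Strict Implicit. Unset Printing Implicit Defensive.

Definition tab6 : seq (seq bool) :=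
  [:: [::false;false;false]; [::true;true;false]; [::false;false;false];
      [::false;true;false]; [::false;false;true]; [::true;false;true]].
Definition tab4 : seq (seq bool) :=
  [:: [::true;true]; [::false;true]; [::true;false]; [::false;false]].

Definition Wf (m : nat) (tab : seq (seq bool)) (k : nat) : bits m :=
  [ffun t : 'I_(Lbits m) => nth false (nth [::] tab k) t].

Definition alice (m : nat) (tab : seq (seq bool)) : {ffun alice_in m -> bits m} :=
  [ffun x : alice_in m => [ffun i : 'I_(Lbits m) =>
     \big[addb/false]_(k < m) (x k && Wf m tab k i)]].

Definition zb (m : nat) : bits m := [ffun _ => false].

Lemma key m tab (d : bits m) (x : alice_in m) :
  dotb d (xorb_bits (alice m tab x) (zb m)) =
  \big[addb/false]_(k < m) (x k && dotb d (Wf m tab k)).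
Proof.
rewrite /dotb.
under eq_bigr do rewrite !ffunE addbF big_distrr.
rewrite exchange_big; apply: eq_bigr => k _.
rewrite big_distrr; apply: eq_bigr => i _.
by rewrite /= andbCA.
Qed.

Definition dotn (L i j : nat) (row : seq bool) : bool :=
  foldr addb false [seq (odd (i %/ 2 ^ (L.-1 - t)) (+) odd (j %/ 2 ^ (L.-1 - t)))
                          && nth false row t | t <- iota 0 L].

Lemma dotbE m tab (i j : 'I_m) k :
  dotb (xorb_bits (bin i) (bin j)) (Wf m tab k) = dotn (Lbits m) i j (nth [::] tab k).
Proof.
rewrite /dotb /dotn.
transitivity (\big[addb/false]_(0 <= t < Lbits m)
   ((odd (i %/ 2 ^ ((Lbits m).-1 - t)) (+) odd (j %/ 2 ^ ((Lbits m).-1 - t)))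
    && nth false (nth [::] tab k) t)).
  by rewrite big_mkord; apply: eq_bigr => t _; rewrite !ffunE.
rewrite /index_iota subn0.
by elim: (iota 0 _) => [|a s IH]; rewrite ?big_nil ?big_cons //= IH.
Qed.

Definition chk (m : nat) tab (S : pred nat) : bool :=
  all (fun i => all (fun j => (S i && S j && (i != j)) ==>
     all (fun k => dotn (Lbits m) i j (nth [::] tab k) == (k == i) || (k == j)) (iota 0 m))
     (iota 0 m)) (iota 0 m).

Definition S6 : pred nat := fun n => n \in [:: 1; 3; 4; 5].
Definition S4 : pred nat := fun n => n \in [:: 0; 1; 2].

Lemma chk6 : chk 6 tab6 S6. Proof. by vm_compute. Qed.
Lemma chk4 : chk 4 tab4 S4. Proof. by vm_compute. Qed.

Lemma sum2 m (x : alice_in m) (i j : 'I_m) : i != j ->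
  \big[addb/false]_(k < m) (x k && ((k == i) || (k == j))) = x i (+) x j.
Proof.
move=> ij; rewrite (bigD1 i) // eqxx andbT (bigD1 j) /=; last first.
  by apply/negP => /eqP E; move: ij; rewrite E eqxx.
have ji : (j == i) = false by apply/negP => /eqP E; move: ij; rewrite E eqxx.
rewrite ji /= eqxx andbT.
rewrite big1 ?addbF // => k /andP[ki kj].
by rewrite (negPf ki) (negPf kj) andbF.
Qed.

Lemma partner m (y : matching m) (i : 'I_m) : exists2 j, j != i & [set i; j] \in val y.
Proof.
case: y => M /= /andP[/and3P[/eqP cov _ _] /forall_inP card].
have: i \in cover M by rewrite cov inE.
case/bigcupP => B BM iB.
have /cards2P [u [v [uv defB]]] := card B BM.
move: iB; rewrite defB !inE => /orP[]/eqP ->.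
  by exists v; [rewrite eq_sym | rewrite -defB].
by exists u => //; rewrite setUC -defB.
Qed.

Lemma blockeq m (y : matching m) (a b p : 'I_m) : a != p ->
  [set a; p] \in val y -> [set b; p] \in val y -> a = b.
Proof.
case: y => M /= /andP[/and3P[_ /trivIsetP T _] _] ap Ha Hb.
case: (eqVneq [set a; p] [set b; p]) => [E|ne].
  have: a \in [set b; p] by rewrite -E set21.
  by rewrite !inE => /orP[/eqP//|/eqP ap']; rewrite ap' eqxx in ap.
move: (T _ _ Ha Hb ne) => /pred0P/(_ p) /=.
by rewrite !inE !eqxx !orbT.
Qed.

Lemma mem_iota_ord m (i : 'I_m) : val i \in iota 0 m.
Proof. by rewrite mem_iota add0n ltn_ord. Qed.

Section Gen.
Variables (m : nat) (tab : seq (seq bool)) (S : pred nat) (i0 : 'I_m).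
Hypothesis Hchk : chk m tab S.
Hypothesis Hex : forall y : matching m, exists i j : 'I_m,
  [&& S i, S j, i != j & [set i; j] \in val y].

Definition bobP (y : matching m) : pred ('I_m * 'I_m) :=
  fun p => [&& S p.1, S p.2, p.1 != p.2 & [set p.1; p.2] \in val y].

Definition bob (y : matching m) : bob_out m :=
  match pick (bobP y) with
  | Some p => (p.1, p.2, zb m)
  | None => (i0, i0, zb m)
  end.

Definition s0 : det_strategy m := (alice m tab, [ffun y => bob y]).

Lemma s0_wins x y : det_wins s0 x y.
Proof.
rewrite /det_wins.
have -> : s0.2 y = bob y by rewrite ffunE.
rewrite /bob.
case: (pickP (bobP y)) => [[i j] /and4P[Si Sj ij iny] | none]; last first.
  by have [i [j H]] := Hex y; move: (none (i, j)); rewrite /bobP /= H.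
rewrite /wins /=; move: iny Si Sj ij => /= iny Si Sj ij; rewrite iny /= key.
have E : forall k : 'I_m, dotb (xorb_bits (bin i) (bin j)) (Wf m tab k)
                         = (val k == val i) || (val k == val j).
  move=> k; rewrite dotbE.
  have /allP/(_ i (mem_iota_ord i))/allP/(_ j (mem_iota_ord j)) := Hchk.
  rewrite Si Sj /= (inj_eq val_inj) ij /= => /allP/(_ k (mem_iota_ord k)).
  by move/eqP.
under eq_bigr do rewrite E !(inj_eq val_inj).
by rewrite sum2.
Qed.
End Gen.
Import GRing.Theory.
Local Open Scope ring_scope.
Lemma point m (s : det_strategy m) : (forall x y, det_wins s x y) ->
  has_classical_winning_strategy m.
Proof.
move=> H; exists [ffun t => if t == s then 1 else 0]; split; [split|].
- by move=> t; rewrite ffunE; case: (t == s).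
- rewrite (bigD1 s) //= ffunE eqxx big1 ?addr0 // => t ts.
  by rewrite ffunE (negPf ts).
- move=> x y; rewrite (bigD1 s) ?H //= ffunE eqxx big1 ?addr0 // => t /andP[_ ts].
  by rewrite ffunE (negPf ts).
Qed.
Local Close Scope ring_scope.

Lemma notS6 (a : 'I_6) : ~~ S6 a -> val a \in [:: 0; 2].
Proof. by case: a => [[|[|[|[|[|[|]]]]]] ?]. Qed.

Lemma Hex6 (y : matching 6) : exists i j : 'I_6,
  [&& S6 i, S6 j, i != j & [set i; j] \in val y].
Proof.
pose o1 : 'I_6 := Ordinal (isT : 1 < 6); pose o3 : 'I_6 := Ordinal (isT : 3 < 6); pose o5 : 'I_6 := Ordinal (isT : 5 < 6).
have S1 : S6 o1 by [].
have S3 : S6 o3 by [].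
have S5 : S6 o5 by [].
have [j1 n1 h1] := partner y o1.
have [j3 n3 h3] := partner y o3.
have [j5 n5 h5] := partner y o5.
case T1: (S6 j1); first by exists o1, j1; rewrite S1 T1 eq_sym n1 h1.
case T3: (S6 j3); first by exists o3, j3; rewrite S3 T3 eq_sym n3 h3.
case T5: (S6 j5); first by exists o5, j5; rewrite S5 T5 eq_sym n5 h5.
exfalso.
have ne : forall (a b : 'I_6) j, val a != val b -> j != a ->
   [set a; j] \in val y -> [set b; j] \in val y -> False.
  move=> a b j ab ja ha hb; have := blockeq (b:=b) _ ha hb.
  by rewrite eq_sym ja => /(_ isT) E; rewrite E eqxx in ab.
have v1 := notS6 (negbT T1); have v3 := notS6 (negbT T3); have v5 := notS6 (negbT T5).
have e13 : val o1 != val o3 by [].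
have e15 : val o1 != val o5 by [].
have e35 : val o3 != val o5 by [].
have P : (j1 == j3) || (j1 == j5) || (j3 == j5).
  rewrite -!(inj_eq val_inj).
  by move: v1 v3 v5; rewrite !inE => /orP[]/eqP-> /orP[]/eqP-> /orP[]/eqP->.
case/orP: P => [/orP[]|] /eqP E.
- by apply: (ne o1 o3 j1 e13 n1 h1); rewrite E.
- by apply: (ne o1 o5 j1 e15 n1 h1); rewrite E.
- by apply: (ne o3 o5 j3 e35 n3 h3); rewrite E.
Qed.

Lemma notS4 (a : 'I_4) : ~~ S4 a -> val a = 3.
Proof. by case: a => [[|[|[|[|]]]] ?]. Qed.

Lemma Hex4 (y : matching 4) : exists i j : 'I_4,
  [&& S4 i, S4 j, i != j & [set i; j] \in val y].
Proof.
pose o0 : 'I_4 := Ordinal (isT : 0 < 4); pose o1 : 'I_4 := Ordinal (isT : 1 < 4).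
have S0 : S4 o0 by [].
have S1 : S4 o1 by [].
have [j0 n0 h0] := partner y o0.
have [j1 n1 h1] := partner y o1.
case T0: (S4 j0); first by exists o0, j0; rewrite S0 T0 eq_sym n0 h0.
case T1: (S4 j1); first by exists o1, j1; rewrite S1 T1 eq_sym n1 h1.
exfalso.
have E : j0 = j1 by apply: val_inj; rewrite (notS4 (negbT T0)) (notS4 (negbT T1)).
have := blockeq (b:=o1) _ h0; rewrite eq_sym n0 E => /(_ isT h1) /(congr1 val).
by [].
Qed.

Theorem theorem1 :
  has_classical_winning_strategy 4 /\ has_classical_winning_strategy 6.
Proof.
split.
- exact: (point (s0_wins ord0 chk4 Hex4)).
- exact: (point (s0_wins ord0 chk6 Hex6)).
Qed.
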